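(* Let $n\ge 3$ and let $D$ be a strongly connected spanning subdigraph of $\overleftrightarrow{C_n}$ having $k\ge 1$ asymmetric arcs. Then $rc^*(D)=n-1$ if $k\le 2$, and $rc^*(D)=n$ if $k\ge 3$. Moreover, if $k\ge 3$, then $rc^*(D)=src^*(D)=n$.
   Context: $\overleftrightarrow{C_n}$ denotes the biorientation of the cycle $C_n$ on $n$ vertices (each edge $uv$ replaced by arcs $uv$ and $vu$). An arc $uv$ of a digraph $D$ is asymmetric if $vu\notin A(D)$. For a strongly connected digraph $D$ and an arc-colouring $\Gamma:A(D)\to\{1,\dots,k\}$, a directed path is rainbow if its arcs have pairwise distinct colours. $\Gamma$ is rainbow connected if for every ordered pair of distinct vertices $x,y$ there is a rainbow directed $xy$-path; $rc^*(D)$ is the minimum $k$ admitting such a colouring. $\Gamma$ is strongly rainbow connected if for every ordered pair of distinct vertices $x,y$ there is a rainbow directed $xy$-path of length $d_D(x,y)$; $src^*(D)$ is the minimum such $k$. *)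

(* Defs.v *)
From mathcomp Require Import all_boot.
Set Implicit Arguments. Unset Strict Implicit. Unset Printing Implicit Defensive.

(* Vertices of C_n are 'I_n; a digraph on 'I_n is given by its arc set. *)
Definition darc (n : nat) := ('I_n * 'I_n)%type.

Definition cyc_adj (n : nat) (i j : 'I_n) : bool :=
  (nat_of_ord j == i.+1 %% n) || (nat_of_ord i == j.+1 %% n).

Definition biorient_cycle (n : nat) : {set darc n} :=
  [set a | cyc_adj a.1 a.2].

Definition arel (n : nat) (A : {set darc n}) : rel 'I_n :=
  fun u v => (u, v) \in A.

Definition strongly_connected (n : nat) (A : {set darc n}) : Prop :=
  forall x y : 'I_n, connect (arel A) x y.

Definition asym_arcs (n : nat) (A : {set darc n}) : {set darc n} :=
  [set a in A | (a.2, a.1) \notin A].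

Definition dipath (n : nat) (A : {set darc n}) (x y : 'I_n) (p : seq 'I_n) : bool :=
  [&& path (arel A) x p, last x p == y & uniq (x :: p)].

(* Arcs of the path x :: p; its length is size p. *)
Definition path_arcs (n : nat) (x : 'I_n) (p : seq 'I_n) : seq (darc n) :=
  zip (x :: p) p.

Definition rainbow (n k : nat) (c : darc n -> 'I_k) (x : 'I_n) (p : seq 'I_n) : bool :=
  uniq (map c (path_arcs x p)).

Definition is_dist (n : nat) (A : {set darc n}) (x y : 'I_n) (l : nat) : Prop :=
  (exists p, dipath A x y p /\ size p = l) /\
  (forall q, dipath A x y q -> l <= size q).

Definition rainbow_connected (n k : nat) (A : {set darc n}) (c : darc n -> 'I_k) : Prop :=
  forall x y : 'I_n, x != y -> exists p, dipath A x y p /\ rainbow c x p.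

Definition strongly_rainbow_connected (n k : nat) (A : {set darc n}) (c : darc n -> 'I_k) : Prop :=
  forall x y : 'I_n, x != y -> forall l, is_dist A x y l ->
    exists p, [/\ dipath A x y p, size p = l & rainbow c x p].

Definition is_rc (n : nat) (A : {set darc n}) (m : nat) : Prop :=
  (exists c : darc n -> 'I_m, rainbow_connected A c) /\
  (forall k (c : darc n -> 'I_k), rainbow_connected A c -> m <= k).

Definition is_src (n : nat) (A : {set darc n}) (m : nat) : Prop :=
  (exists c : darc n -> 'I_m, strongly_rainbow_connected A c) /\
  (forall k (c : darc n -> 'I_k), strongly_rainbow_connected A c -> m <= k).

(* Main.v *)
Require Import Defs.
From mathcomp Require Import all_boot zify.
Set Implicit Arguments. Unset Strict Implicit. Unset Printing Implicit Defensive.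

Record cycdir n (s t : 'I_n -> 'I_n) : Prop := CycDir {
  cd_st : cancel s t; cd_ts : cancel t s;
  cd_adj : forall i j : 'I_n, cyc_adj i j = (j == s i) || (i == s j);
  cd_per : forall (x : 'I_n) j, 0 < j < n -> iter j s x != x;
  cd_n : forall x : 'I_n, iter n s x = x }.

Lemma iterK (T : Type) (f g : T -> T) : cancel g f -> forall j x, iter j f (iter j g x) = x.
Proof.
move=> K; elim=> [//|j IH] x; by rewrite iterSr iterS K IH.
Qed.

Lemma iter_ordS n (x : 'I_n) j : val (iter j (@ordS n) x) = (x + j) %% n.
Proof.
elim: j => [|j IH] /=; first by rewrite addn0 modn_small.
by rewrite IH addnS -addn1 modnDml addn1.
Qed.

Lemma cycdirS n : cycdir (@ordS n) (@ord_pred n).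
Proof.
split; [exact: ordSK | exact: ord_predK | | |].
- by move=> i j.
- move=> x j /andP[j0 jn]; apply/eqP => /(congr1 val); rewrite iter_ordS.
  move=> E; have /eqP: (x + j = x + 0 %[mod n]) by rewrite E addn0 modn_small.
  by rewrite eqn_modDl mod0n modn_small // => /eqP j0'; move: j0; rewrite j0'.
- by move=> x; apply: val_inj; rewrite iter_ordS modnDr modn_small.
Qed.

Lemma cycdir_sym n (s t : 'I_n -> 'I_n) : cycdir s t -> cycdir t s.
Proof.
case=> st ts adj per nn; split => //.
- move=> i j; rewrite adj orbC; congr orb.
  + by rewrite eq_sym (can2_eq st ts) eq_sym.
  + by rewrite eq_sym (can2_eq st ts).
- move=> x j jn; apply/negP => /eqP E.
  have := per x j jn; by rewrite -{1}E iterK ?eqxx.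
- move=> x; by rewrite -{1}(nn x) iterK.
Qed.

Lemma arcs_traject n (f : 'I_n -> 'I_n) x m :
  path_arcs x (traject f (f x) m) = map (fun v => (v, f v)) (traject f x m).
Proof. by elim: m x => [//|m IH] x; rewrite /path_arcs /= -IH. Qed.

Lemma path_traject n (e : rel 'I_n) f x m :
  (forall v, v \in traject f x m -> e v (f v)) -> path e x (traject f (f x) m).
Proof.
elim: m x => [//|m IH] x H /=; rewrite H ?mem_head //=.
by apply: IH => v vin; apply: H; rewrite inE vin orbT.
Qed.

Lemma traject_path n (e : rel 'I_n) f x m :
  path e x (traject f (f x) m) -> forall v, v \in traject f x m -> e v (f v).
Proof.
elim: m x => [//|m IH] x /= /andP[exf pf] v; rewrite inE => /orP[/eqP->//|].
exact: IH.
Qed.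

Lemma uniq_traj n (s t : 'I_n -> 'I_n) x m : cycdir s t -> m <= n -> uniq (traject s x m).
Proof.
move=> cd; elim: m => [//|m IH] mn; rewrite trajectSr rcons_uniq IH ?andbT; last by lia.
apply/trajectP => -[i im E].
have := cd_per cd (iter i s x) (j := m - i); rewrite -iterD subnK ?E ?eqxx; last by lia.
by move=> /(_ _)/negP; apply; lia.
Qed.

Lemma cover n (s t : 'I_n -> 'I_n) x y : cycdir s t -> y \in traject s x n.
Proof.
move=> cd; apply/negPn/negP => yn.
have U : uniq (y :: traject s x n) by rewrite /= yn (@uniq_traj n s t x n cd (leqnn n)).
have := max_card (mem (y :: traject s x n)); rewrite (card_uniqP U) /= size_traject card_ord.
by rewrite ltnn.
Qed.

Lemma cover2 n (s t : 'I_n -> 'I_n) v w : cycdir s t -> v != w -> v \in traject s (s w) n.-1.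
Proof.
move=> cd vw; have n0 : 0 < n by case: n v {vw cd s t w} => [[]|].
have E : traject s (s w) n = rcons (traject s (s w) n.-1) (iter n.-1 s (s w)).
  by rewrite -trajectSr prednK.
have := @cover n s t (s w) v cd; rewrite E mem_rcons inE.
by rewrite -iterSr prednK // (cd_n cd) (negbTE vw).
Qed.

Lemma uniq_size_le (T : finType) (l : seq T) : uniq l -> size l <= #|T|.
Proof. by move=> U; rewrite -(card_uniqP U) max_card. Qed.

Lemma fwd n (s t : 'I_n -> 'I_n) : cycdir s t -> forall p x,
  path (@cyc_adj n) x (s x :: p) -> uniq (x :: s x :: p) ->
  s x :: p = traject s (s x) (size p).+1.
Proof.
move=> cd; elim=> [//|z p IH] x /= /and3P[_ az pp] /and3P[xn sxn U].
move: az; rewrite (cd_adj cd) => /orP[/eqP zE|/eqP szE]; last first.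
  by move: xn; rewrite -(can_inj (cd_st cd) szE) !inE eqxx orbT.
subst z; congr cons; apply: IH => /=; first by rewrite (cd_adj cd) eqxx.
by rewrite sxn.
Qed.

Lemma arelA n (A : {set darc n}) u v :
  A \subset biorient_cycle n -> arel A u v -> cyc_adj u v.
Proof. by move=> /subsetP sA /sA; rewrite inE. Qed.

Lemma forced n (A : {set darc n}) (s t : 'I_n -> 'I_n) w p :
  cycdir s t -> 1 < n -> A \subset biorient_cycle n -> (s w, w) \notin A ->
  dipath A (s w) w p -> p = traject s (s (s w)) n.-1.
Proof.
move=> cd n1 sA nA /and3P[pth /eqP lst U].
case: p pth lst U => [_ /= swE _|z p].
  by have := cd_per cd w (j := 1); rewrite /= swE eqxx n1 => /(_ isT).
rewrite /= => /andP[az pth] lst U.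
have : cyc_adj (s w) z by apply: arelA az.
rewrite (cd_adj cd) => /orP[/eqP zE|/eqP szE]; last first.
  by move: az nA; rewrite (can_inj (cd_st cd) szE) /arel => ->.
subst z.
have P : path (@cyc_adj n) (s w) (s (s w) :: p).
  by rewrite /= (cd_adj cd) eqxx /=; apply: sub_path pth => u v; apply: arelA.
have E := fwd cd P U.
have U' : uniq (traject s (s w) (size p).+2) by rewrite trajectS -E.
have Hl : iter (size p).+2 s w = w by rewrite iterSr -last_traject -E.
have Hs := uniq_size_le U'; rewrite size_traject card_ord in Hs.
case: (ltngtP (size p).+2 n) => [lt|gt|eq]; last by rewrite E; congr traject; lia.
  by have := cd_per cd w (j := (size p).+2); rewrite Hl eqxx lt => /(_ isT).
by lia.
Qed.

Lemma dipath_ex n (A : {set darc n}) x y :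
  strongly_connected A -> exists p, dipath A x y p.
Proof.
move=> sc; have /connectP[p pth ->] := sc x y.
case/shortenP: pth => p' pp' up' _; exists p'; by rewrite /dipath pp' up' eqxx.
Qed.

Definition key n (s : 'I_n -> 'I_n) (a : darc n) : 'I_n :=
  if a.2 == s a.1 then a.1 else a.2.

Lemma key_inj n (s t : 'I_n -> 'I_n) x y a b : cycdir s t ->
  cyc_adj x y -> cyc_adj a b -> key s (x, y) = key s (a, b) -> (x == a) || (x == b).
Proof.
move=> cd; rewrite !(cd_adj cd) /key /=.
case: (eqVneq y (s x)) => [->|ny] /=; case: (eqVneq b (s a)) => [->|nb] /=.
- by move=> _ _ ->; rewrite eqxx.
- by move=> _ _ ->; rewrite eqxx orbT.
- by move=> /eqP -> _ <-; rewrite eqxx orbT.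
- by move=> /eqP -> /eqP -> ->; rewrite eqxx.
Qed.

Lemma arcs_mem n (e : rel 'I_n) x p a b : path e x p -> (a, b) \in path_arcs x p ->
  [&& e a b, a \in x :: p & b \in x :: p].
Proof.
elim: p x => [//|y p IH] x /= /andP[exy pth]; rewrite inE => /orP[/eqP[-> ->]|H].
  by rewrite exy !inE !eqxx orbT.
have /and3P[-> ai bi] := IH y pth H.
by rewrite in_cons ai orbT in_cons bi orbT.
Qed.

Lemma key_uniq n (s t : 'I_n -> 'I_n) x p : cycdir s t ->
  path (@cyc_adj n) x p -> uniq (x :: p) -> uniq (map (key s) (path_arcs x p)).
Proof.
move=> cd; elim: p x => [//|y p IH] x /= /andP[axy pth] /andP[xn U].
rewrite IH // andbT; apply/mapP => -[[a b] abin E].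
have /and3P[aab ai bi] := arcs_mem pth abin.
have := key_inj cd axy aab E => /orP[/eqP xa|/eqP xb].
  by move: xn; rewrite xa ai.
by move: xn; rewrite xb bi.
Qed.

Lemma per1 n (s t : 'I_n -> 'I_n) w : cycdir s t -> 1 < n -> s w != w.
Proof. by move=> cd n1; have := cd_per cd w (j := 1); rewrite n1; apply. Qed.

Lemma allfwd n (A : {set darc n}) (s t : 'I_n -> 'I_n) u :
  cycdir s t -> 1 < n -> A \subset biorient_cycle n -> strongly_connected A ->
  (u, s u) \in asym_arcs A -> forall v, (v, s v) \in A.
Proof.
move=> cd n1 sA sc; rewrite inE /= => /andP[uA nA] v.
have [p dp] := dipath_ex (s u) u sc.
have E := forced cd n1 sA nA dp.
case/and3P: dp => pth _ _; rewrite E in pth.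
have := traject_path pth; case: (eqVneq v u) => [->//|vu] H.
exact: (H v (cover2 cd vu)).
Qed.

Lemma asym_fwd n (A : {set darc n}) (s t : 'I_n -> 'I_n) u :
  cycdir s t -> 1 < n -> A \subset biorient_cycle n -> strongly_connected A ->
  (u, s u) \in asym_arcs A -> forall a, a \in asym_arcs A -> a.2 = s a.1.
Proof.
move=> cd n1 sA sc ua [x y]; rewrite inE /= => /andP[xyA nA].
have : cyc_adj x y by apply: arelA xyA.
rewrite (cd_adj cd) => /orP[/eqP //|/eqP xE].
by move: nA; rewrite xE (allfwd cd n1 sA sc ua).
Qed.

Lemma uniq_map_eq (T T2 : eqType) (g : T -> T2) l i j :
  uniq (map g l) -> i \in l -> j \in l -> g i = g j -> i = j.
Proof.
elim: l => [//|z l IH] /= /andP[gz U]; rewrite !inE.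
case/orP=> [/eqP->|il]; case/orP=> [/eqP->|jl] //.
- by move=> E; move: gz; rewrite E map_f.
- by move=> E; move: gz; rewrite -E map_f.
- exact: IH.
Qed.

Lemma LB1 n (A : {set darc n}) (s t : 'I_n -> 'I_n) u k (c : darc n -> 'I_k) :
  cycdir s t -> 1 < n -> A \subset biorient_cycle n -> strongly_connected A ->
  (u, s u) \in asym_arcs A -> rainbow_connected A c -> n - 1 <= k.
Proof.
move=> cd n1 sA sc ua rc.
have [p [dp rb]] := rc (s u) u (per1 u cd n1).
have nA : (s u, u) \notin A by move: ua; rewrite inE => /andP[].
have E := forced cd n1 sA nA dp.
have := uniq_size_le rb; rewrite card_ord size_map E arcs_traject size_map size_traject.
by rewrite subn1.
Qed.

Lemma LB2 n (A : {set darc n}) (s t : 'I_n -> 'I_n) u k (c : darc n -> 'I_k) :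
  cycdir s t -> 1 < n -> A \subset biorient_cycle n -> strongly_connected A ->
  (u, s u) \in asym_arcs A -> 3 <= #|asym_arcs A| -> rainbow_connected A c -> n <= k.
Proof.
move=> cd n1 sA sc ua k3 rc.
suff inj : injective (fun i => c (i, s i)) by have := leq_card _ inj; rewrite !card_ord.
move=> i j cij; apply/eqP/negPn/negP => ij.
set B := asym_arcs A :\ (i, s i) :\ (j, s j).
have : 0 < #|B|.
  move: k3; rewrite (cardsD1 (i, s i)) (cardsD1 (j, s j) (asym_arcs A :\ (i, s i))).
  rewrite -/B => h; rewrite lt0n; apply/negP => /eqP B0; move: h; rewrite B0 addn0.
  by rewrite ltnNge (leq_add (leq_b1 _) (leq_b1 _)).
rewrite card_gt0 => /set0Pn[a]; rewrite /B !in_setD1 => /and3P[aj ai aA].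
have a2 := asym_fwd cd n1 sA sc ua aA.
move: a aj ai aA a2 => [w w'] /= aj ai aA a2; subst w'.
have wi : i != w by apply: contra ai => /eqP->.
have wj : j != w by apply: contra aj => /eqP->.
have [p [dp rb]] := rc (s w) w (per1 w cd n1).
have nA : (s w, w) \notin A by move: aA; rewrite inE => /andP[].
have E := forced cd n1 sA nA dp.
move: rb; rewrite /rainbow E arcs_traject -map_comp => rb.
have := uniq_map_eq rb (cover2 cd wi) (cover2 cd wj) cij.
by move=> eij; move: ij; rewrite eij eqxx.
Qed.

Lemma key_rb n (A : {set darc n}) (s t : 'I_n -> 'I_n) x y p :
  cycdir s t -> A \subset biorient_cycle n -> dipath A x y p -> rainbow (key s) x p.
Proof.
move=> cd sA /and3P[pth _ U]; apply: key_uniq cd _ U.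
by apply: sub_path pth => u v; apply: arelA.
Qed.

Lemma dist_ex n (A : {set darc n}) x y :
  strongly_connected A -> exists l, is_dist A x y l.
Proof.
move=> sc; have [p dp] := dipath_ex x y sc.
have exP : exists l, [exists q : l.-tuple 'I_n, dipath A x y q].
  by exists (size p); apply/existsP; exists (in_tuple p).
case: (ex_minnP exP) => m /existsP[q dq] mmin.
exists m; split; first by exists q; rewrite size_tuple.
move=> q' dq'; apply: mmin; apply/existsP; by exists (in_tuple q').
Qed.

Lemma src_rc n (A : {set darc n}) k (c : darc n -> 'I_k) :
  strongly_connected A -> strongly_rainbow_connected A c -> rainbow_connected A c.
Proof.
move=> sc src x y xy; have [l dl] := dist_ex x y sc.
by have [p [dp _ rb]] := src x y xy l dl; exists p.
Qed.

Lemma UB3 n (A : {set darc n}) (s t : 'I_n -> 'I_n) :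
  cycdir s t -> A \subset biorient_cycle n -> strongly_connected A ->
  rainbow_connected A (key s) /\ strongly_rainbow_connected A (key s).
Proof.
move=> cd sA sc; split; [rewrite /rainbow_connected | rewrite /strongly_rainbow_connected].
  move=> x y _; have [p dp] := dipath_ex x y sc; exists p; split=> //.
  exact: key_rb cd sA dp.
move=> x y _ l [[p [dp sz]] _]; exists p; split=> //; exact: key_rb cd sA dp.
Qed.

Lemma hv_nat (a b e : nat) : a != e -> b != e ->
  (if e < a then a.-1 else a) = (if e < b then b.-1 else b) -> a = b.
Proof. by move=> /eqP ae /eqP be; case: ifP => ? ; case: ifP => ?; lia. Qed.

Definition hsel n (e1 e2 i : 'I_n) : 'I_n := if i == e2 then e1 else i.
Definition hv n (e1 e2 i : 'I_n) : nat :=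
  if e2 < hsel e1 e2 i then (hsel e1 e2 i).-1 else hsel e1 e2 i.

Lemma hsel_neq n (e1 e2 i : 'I_n) : e1 != e2 -> hsel e1 e2 i != e2.
Proof. by move=> H; rewrite /hsel; case: (eqVneq i e2). Qed.

Lemma hv_lt n (e1 e2 : 'I_n) i : e1 != e2 -> hv e1 e2 i < n - 1.
Proof.
move=> H; have := hsel_neq i H; rewrite /hv.
move: (hsel e1 e2 i) => j /eqP jn.
have : nat_of_ord j != nat_of_ord e2 by apply/eqP => /val_inj.
have := ltn_ord j; have := ltn_ord e2.
by case: (ltnP e2 j) => ? ? ? /eqP; lia.
Qed.

Definition hord n (e1 e2 : 'I_n) (H : e1 != e2) (i : 'I_n) : 'I_(n - 1) :=
  Ordinal (hv_lt i H).

Lemma hv_uniq n (e1 e2 : 'I_n) l : e1 != e2 -> uniq l ->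
  ~~ ((e1 \in l) && (e2 \in l)) -> uniq (map (hv e1 e2) l).
Proof.
move=> H; elim: l => [//|z l IH] /= /andP[zl U] nb.
rewrite IH //; last first.
  by apply: contra nb => /andP[a b]; rewrite !in_cons a b !orbT.
rewrite andbT; apply/mapP => -[y yl E].
have E' : hsel e1 e2 z = hsel e1 e2 y.
  apply: val_inj; apply: hv_nat E; apply/eqP => /val_inj /eqP;
  by rewrite ?(negbTE (hsel_neq _ H)).
move: E'; rewrite /hsel.
case: (eqVneq z e2) => [ze|ze]; case: (eqVneq y e2) => [ye|ye].
- by move: zl; rewrite ze -ye yl.
- move=> e1y; move: nb; by rewrite !in_cons e1y yl -ze eqxx !orbT.
- move=> ze1; move: nb; by rewrite !in_cons -ye yl ze1 eqxx !orbT.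
- by move=> zy; move: zl; rewrite zy yl.
Qed.

Lemma map_traject (T : Type) (f : T -> T) x m :
  map f (traject f x m) = traject f (f x) m.
Proof. by elim: m x => [//|m IH] x /=; rewrite IH. Qed.

Lemma ts_neq n (s t : 'I_n -> 'I_n) v : cycdir s t -> 2 < n -> t v != s v.
Proof.
move=> cd n2; apply/eqP => E.
have := cd_per cd v (j := 2); rewrite n2 /= -E (cd_ts cd) eqxx.
by move=> /(_ isT).
Qed.

Lemma disj n (s t : 'I_n -> 'I_n) x j w : cycdir s t -> 0 < j ->
  w \in traject s x j -> w \in traject t (t x) (n - j) -> False.
Proof.
move=> cd j0 /trajectP[a aj ->] /trajectP[b bj E].
have E2 : iter (b.+1 + a) s x = x.
  by rewrite iterD E -iterSr (iterK (cd_ts cd)).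
have := cd_per cd x (j := b.+1 + a); rewrite E2 eqxx => /(_ _) /negP; apply.
  by lia. by [].
Qed.

Lemma rb_of n (e1 e2 : 'I_n) (H : e1 != e2) (s : 'I_n -> 'I_n) x p :
  uniq (map (key s) (path_arcs x p)) ->
  ~~ ((e1 \in map (key s) (path_arcs x p)) && (e2 \in map (key s) (path_arcs x p))) ->
  rainbow (fun a => hord H (key s a)) x p.
Proof.
move=> U nb; rewrite /rainbow; apply: (@map_uniq _ _ val).
rewrite -map_comp.
have -> : map (val \o (fun a => hord H (key s a))) (path_arcs x p) =
          map (hv e1 e2) (map (key s) (path_arcs x p)) by rewrite -map_comp.
exact: hv_uniq.
Qed.

Lemma UB2 n (A : {set darc n}) (s t : 'I_n -> 'I_n) e1 e2 (H : e1 != e2) :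
  cycdir s t -> 2 < n -> A \subset biorient_cycle n ->
  (forall v, (v, s v) \in A) ->
  (forall w, (w, s w) \in asym_arcs A -> (w == e1) || (w == e2)) ->
  rainbow_connected A (fun a => hord H (key s a)).
Proof.
move=> cd n2 sA fw asy x y xy.
have cd' := cycdir_sym cd.
have /trajectP[j jn yE] := cover x y cd.
have j0 : 0 < j by case: j jn yE => // _ yE; move: xy; rewrite yE eqxx.
have keyF : map (key s) (path_arcs x (traject s (s x) j)) = traject s x j.
  rewrite arcs_traject -map_comp -[RHS]map_id; apply: eq_map => v.
  by rewrite /= /key /= eqxx.
have keyB : map (key s) (path_arcs x (traject t (t x) (n - j))) = traject t (t x) (n - j).
  rewrite arcs_traject -map_comp -map_traject; apply: eq_map => v.
  by rewrite /= /key /= (negbTE (ts_neq v cd n2)).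
have uF : uniq (traject s x j) by apply: (uniq_traj _ cd); lia.
have uB : uniq (traject t (t x) (n - j)).
  by have := @uniq_traj n t s x (n - j).+1 cd'; rewrite trajectS /= => /(_ _)/andP[]; lia.
case: (boolP ((e1 \in traject s x j) && (e2 \in traject s x j))) => [/andP[i1 i2]|nb].
- exists (traject t (t x) (n - j)); split; last first.
    apply: rb_of; rewrite keyB //; apply/negP => /andP[b1 _].
    exact: (disj cd j0 i1 b1).
  apply/and3P; split.
  + apply: path_traject => v vin.
    have wB : t v \in traject t (t x) (n - j) by rewrite -map_traject map_f.
    rewrite /arel -{1}(cd_ts cd v).
    case: (boolP ((s (t v), t v) \in A)) => // nA.
    have : (t v, s (t v)) \in asym_arcs A by rewrite inE /= fw nA.
    move=> /asy /orP[/eqP e|/eqP e].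
      by exfalso; apply: (disj cd j0 i1); rewrite -e.
    by exfalso; apply: (disj cd j0 i2); rewrite -e.
  + rewrite last_traject yE.
    have E : iter (n - j + j) s x = x by rewrite subnK ?(ltnW jn) // (cd_n cd).
    by rewrite iterD in E; rewrite -{1}E (iterK (cd_st cd)).
  + by rewrite -trajectS; apply: (uniq_traj _ cd'); lia.
- exists (traject s (s x) j); split; last by apply: rb_of; rewrite keyF.
  apply/and3P; split.
  + by apply: path_traject => v _; apply: fw.
  + by rewrite last_traject yE.
  + by rewrite -trajectS; apply: (uniq_traj _ cd); lia.
Qed.

Lemma main n (A : {set darc n}) (s t : 'I_n -> 'I_n) u :
  cycdir s t -> 2 < n -> A \subset biorient_cycle n -> strongly_connected A ->
  (u, s u) \in asym_arcs A ->
  (#|asym_arcs A| <= 2 -> is_rc A (n - 1)) /\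
  (3 <= #|asym_arcs A| -> is_rc A n /\ is_src A n).
Proof.
move=> cd n2 sA sc ua; have n1 : 1 < n by lia.
have fw := allfwd cd n1 sA sc ua.
have af := asym_fwd cd n1 sA sc ua.
split=> [k2|k3].
  split; last by move=> k c rc; exact: LB1 cd n1 sA sc ua rc.
  case: (eqVneq (asym_arcs A :\ (u, s u)) set0) => [B0|/set0Pn[a2 a2in]].
    have H : u != s u by rewrite eq_sym (per1 u cd n1).
    exists (fun a => hord H (key s a)); apply: UB2 cd n2 sA fw _ => w wa.
    case: (eqVneq w u) => [->|wu] //.
    have : (w, s w) \in asym_arcs A :\ (u, s u).
      by rewrite in_setD1 wa andbT; apply: contra wu => /eqP[->].
    by rewrite B0 inE.
  move: a2in; rewrite in_setD1 => /andP[a2u a2A].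
  have a2E := af _ a2A.
  have H : u != a2.1.
    by apply: contra a2u => /eqP ue; apply/eqP; rewrite [a2]surjective_pairing a2E ue.
  exists (fun a => hord H (key s a)); apply: UB2 cd n2 sA fw _ => w wa.
  case: (eqVneq w u) => [->|wu] //.
  case: (eqVneq w a2.1) => [_|wa2]; first by rewrite orbT.
  have : (w, s w) \in asym_arcs A :\ (u, s u) :\ a2.
    rewrite !in_setD1 wa andbT; apply/andP; split.
      by apply: contra wa2 => /eqP <-.
    by apply: contra wu => /eqP[->].
  move=> win; exfalso; move: k2.
  rewrite (cardsD1 (u, s u)) ua (cardsD1 a2 (asym_arcs A :\ (u, s u))).
  rewrite in_setD1 a2u a2A (cardsD1 (w, s w)) win.
  by [].
have [rc src] := UB3 cd sA sc.
have LB : forall k (c : darc n -> 'I_k), rainbow_connected A c -> n <= k.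
  by move=> k c; apply: LB2 cd n1 sA sc ua k3.
split; split.
- by exists (key s).
- exact: LB.
- by exists (key s).
- by move=> k c sr; apply: LB c (src_rc sc sr).
Qed.

Theorem theorem4 (n : nat) (A : {set darc n}) :
  3 <= n ->
  A \subset biorient_cycle n ->
  strongly_connected A ->
  1 <= #|asym_arcs A| ->
  (#|asym_arcs A| <= 2 -> is_rc A (n - 1)) /\
  (3 <= #|asym_arcs A| -> is_rc A n /\ is_src A n).
Proof.
move=> n3 sA sc; rewrite card_gt0 => /set0Pn[[u v] uvin].
have uvA : (u, v) \in A by move: uvin; rewrite inE => /andP[].
have : cyc_adj u v by apply: arelA uvA.
rewrite (cd_adj (cycdirS n)) => /orP[/eqP vE|/eqP uE].
  by apply: (@main n A _ _ u (cycdirS n) n3 sA sc); rewrite -vE.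
apply: (@main n A _ _ u (cycdir_sym (cycdirS n)) n3 sA sc).
by rewrite uE ordSK -uE.
Qed.
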